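(* Let $f(t)\in\mathcal{O}_{\mathbb{C}_p}[[t]]$ be a power series with $f(0)\in E_p$ and $f'(0)\in U_1$. Then there is a unique $\phi\in C(\mathbb{Z}_p,\mathbb{C}_p)$ such that, as formal power series, $$\exp(f(0))\exp\big(f(t)-f(0)\big)=\sum_{n=0}^\infty\phi(n)\frac{t^n}{n!}\;(=A(\phi)).$$
   Context: Fix a prime $p$; $\mathbb{C}_p$ is the completion of an algebraic closure of $\mathbb{Q}_p$ with $|p|=1/p$. $\mathcal{O}_{\mathbb{C}_p}=\{x\in\mathbb{C}_p:|x|\le1\}$, $U_1=\{x\in\mathbb{C}_p:|x-1|<1\}$, and $E_p=\{x\in\mathbb{C}_p:|x|<p^{-1/(p-1)}\}$, the domain of convergence of the exponential series $\exp$. Since $f(t)-f(0)$ has no constant term, $\exp(f(t)-f(0))$ is a well-defined formal power series. $C(\mathbb{Z}_p,\mathbb{C}_p)$ is the space of continuous functions $\mathbb{Z}_p\to\mathbb{C}_p$, and for such $\phi$, $A(\phi)=\sum_{n\ge0}\phi(n)t^n/n!$. *)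

(* Defs.v *)
From HB Require Import structures.
From mathcomp Require Import all_boot all_order all_algebra.
From mathcomp Require Import reals exp.
Set Implicit Arguments. Unset Strict Implicit. Unset Printing Implicit Defensive.
Import Order.TTheory GRing.Theory Num.Theory.
Local Open Scope ring_scope.

Section Defs.
Variables (R : realType) (K : fieldType) (abs : K -> R).

Definition is_lim (u : nat -> K) (l : K) : Prop :=
  forall eps : R, 0 < eps -> exists N : nat, forall n : nat, (N <= n)%N -> abs (u n - l) < eps.

Definition is_cauchy (u : nat -> K) : Prop :=
  forall eps : R, 0 < eps -> exists N : nat,
    forall m n : nat, (N <= m)%N -> (N <= n)%N -> abs (u m - u n) < eps.

(* (K, abs) is (a copy of) C_p: a field of characteristic 0 with a
   nonarchimedean absolute value normalised by |p| = 1/p, which is complete,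
   algebraically closed, and in which the algebraic numbers (the algebraic
   closure of Q, hence of Q_p) are dense.  This characterises C_p up to
   isometric isomorphism. *)
Record is_Cp (p : nat) : Prop := IsCp {
  Cp_abs_ge0 : forall x, 0 <= abs x;
  Cp_abs_eq0 : forall x, abs x = 0 <-> x = 0;
  Cp_abs_mul : forall x y, abs (x * y) = abs x * abs y;
  Cp_abs_ultra : forall x y, abs (x + y) <= Num.max (abs x) (abs y);
  Cp_abs_p : abs (p%:R) = (p%:R)^-1;
  Cp_char0 : forall n : nat, (n%:R : K) = 0 -> n = 0%N;
  Cp_complete : forall u, is_cauchy u -> exists l, is_lim u l;
  Cp_alg_closed : forall P : {poly K}, (1 < size P)%N -> exists x, root P x;
  Cp_alg_dense : forall (x : K) (eps : R), 0 < eps ->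
     exists y : K, (exists q : {poly rat}, q != 0 /\ root (map_poly ratr q) y)
                   /\ abs (x - y) < eps
}.

Definition exp_partial (x : K) (N : nat) : K :=
  \sum_(k < N) x ^+ k / (k`!)%:R.

(* formal power series = coefficient sequences *)
Definition fps_mul (a b : nat -> K) (n : nat) : K :=
  \sum_(i < n.+1) a i * b (n - i)%N.

Fixpoint fps_pow (g : nat -> K) (k : nat) : nat -> K :=
  match k with
  | 0 => fun n => if n == 0%N then 1 else 0
  | k'.+1 => fps_mul g (fps_pow g k')
  end.

(* formal exp(g) for g with zero constant term: coefficient of t^n is
   sum_{k<=n} [t^n] g^k / k!  (terms with k > n vanish) *)
Definition fps_exp (g : nat -> K) (n : nat) : K :=
  \sum_(k < n.+1) fps_pow g k n / (k`!)%:R.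

Definition fps_drop_const (f : nat -> K) (n : nat) : K :=
  if n == 0%N then 0 else f n.

End Defs.

(* Z_p as the inverse limit of Z/p^k: compatible sequences of residues *)
Definition Zpadic (p : nat) : Type :=
  {x : nat -> nat | forall k, (x k %% p ^ k = x k /\ x k.+1 %% p ^ k = x k)%N}.

Lemma to_Zp_proof (p n : nat) :
  forall k, ((n %% p ^ k) %% p ^ k = n %% p ^ k /\ (n %% p ^ k.+1) %% p ^ k = n %% p ^ k)%N.
Proof.
move=> k; split; first exact: modn_mod.
by rewrite modn_dvdm // expnS dvdn_mull.
Qed.

Definition to_Zp (p n : nat) : Zpadic p :=
  exist _ (fun k => (n %% p ^ k)%N) (to_Zp_proof p n).

Definition Zp_continuous (p : nat) (R : realType) (K : fieldType) (abs : K -> R)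
  (phi : Zpadic p -> K) : Prop :=
  forall (x : Zpadic p) (eps : R), 0 < eps -> exists k : nat,
    forall y : Zpadic p, sval y k = sval x k -> abs (phi y - phi x) < eps.

(* Main.v *)
Require Import Defs.
From HB Require Import structures.
From mathcomp Require Import all_boot all_order all_algebra.
From mathcomp Require Import reals exp.
From mathcomp Require Import zify ring lra.
From Stdlib Require Import ClassicalEpsilon FunctionalExtensionality.
Import Order.TTheory GRing.Theory Num.Theory.
Local Open Scope ring_scope.
Set Implicit Arguments. Unset Strict Implicit. Unset Printing Implicit Defensive.

Lemma legendre_aux p n m : (1 < p)%N ->
  (p.-1 * \sum_(1 <= k < m.+1) n %/ p ^ k + n %/ p ^ m <= n)%N.
Proof.
move=> p1; elim: m => [|m IH]; first by rewrite big_geq // muln0 expn0 divn1.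
rewrite big_nat_recr //= mulnDr -addnA.
have h : (p.-1 * (n %/ p ^ m.+1) + n %/ p ^ m.+1 <= n %/ p ^ m)%N.
  rewrite -[X in (_ + X)%N]mul1n -mulnDl addn1 prednK ?(ltnW p1) //.
  by rewrite expnSr divnMA mulnC leq_trunc_div.
by apply: leq_trans IH; rewrite leq_add2l.
Qed.

Lemma legendre p n : prime p -> (p.-1 * logn p n`! <= n)%N.
Proof.
move=> pp; rewrite logn_fact //; apply: leq_trans (legendre_aux n n (prime_gt1 pp)).
exact: leq_addr.
Qed.

Lemma logn_fact_le p n : prime p -> (logn p n`! <= n)%N.
Proof.
move=> pp; apply: leq_trans (legendre n pp).
have := prime_gt1 pp; case: p pp => // [[]] // p _ _.
by rewrite /= leq_pmull.
Qed.

Lemma dvd_fact_pL p L n : prime p -> (p * L <= n)%N -> (p ^ L %| n`!)%N.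
Proof.
move=> pp h; rewrite pfactor_dvdn ?fact_gt0 // logn_fact //.
case: n h => [|n] h.
  have -> : L = 0%N by move: h; have := prime_gt0 pp; lia.
  by [].
rewrite big_ltn // expn1; apply: leq_trans (leq_addr _ _).
by rewrite leq_divRL ?prime_gt0 // mulnC.
Qed.

Lemma bernoulli_ineq (R : realFieldType) (y : R) n : 0 <= y -> 1 + n%:R * y <= (1 + y) ^+ n.
Proof.
move=> y0; elim: n => [|n IH]; first by rewrite mul0r addr0 expr0.
rewrite exprS; apply: le_trans (_ : (1 + y) * (1 + n%:R * y) <= _); last first.
  by rewrite ler_wpM2l // addr_ge0.
have n0 : 0 <= n%:R :> R := ler0n _ n.
rewrite -nat1r; nra.
Qed.

Lemma pow_small (R : realType) (q eps : R) : 0 <= q -> q < 1 -> 0 < eps ->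
  exists N, forall n, (N <= n)%N -> q ^+ n < eps.
Proof.
move=> q0 q1 e0; have [->|qn0] := eqVneq q 0.
  by exists 1%N => n n1; rewrite expr0n; case: n n1.
have qp : 0 < q by rewrite lt0r qn0.
pose y := q^-1 - 1.
have y0 : 0 < y by rewrite subr_gt0 invf_gt1.
pose N := Num.bound (eps^-1 / y).
exists N => n nN.
have h1 : q ^+ n <= q ^+ N by apply: ler_wiXn2l => //; exact: ltW.
apply: le_lt_trans h1 _.
have hq : q = (1 + y)^-1 by rewrite /y addrC subrK invrK.
have hb := bernoulli_ineq N (ltW y0).
have hN : eps^-1 / y < N%:R by apply: archi_boundP; rewrite divr_ge0 // ltW // invr_gt0.
rewrite hq exprVn.
have pos : 0 < (1 + y) ^+ N by rewrite exprn_gt0 // addr_gt0.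
rewrite -[eps]invrK ltf_pV2 ?posrE ?invr_gt0 //.
have : eps^-1 < N%:R * y by rewrite -ltr_pdivrMr.
move=> h; apply: lt_le_trans hb; lra.
Qed.
Lemma tri_swap (V : zmodType) (F : nat -> nat -> V) n :
  \sum_(a < n.+1) \sum_(b < n.+1 - a) F a b = \sum_(b < n.+1) \sum_(a < n.+1 - b) F a b.
Proof.
have w : forall a : 'I_n.+1, \sum_(b < n.+1 - a) F a b =
    \sum_(b < n.+1) (if (a + b <= n)%N then F a b else 0).
  move=> a; rewrite (big_ord_widen n.+1 (F a)) ?leq_subr // big_mkcond.
  apply: eq_bigr => b _; congr (if _ then _ else _); have := ltn_ord a; lia.
have w' : forall b : 'I_n.+1, \sum_(a < n.+1 - b) F a b =
    \sum_(a < n.+1) (if (a + b <= n)%N then F a b else 0).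
  move=> b; rewrite (big_ord_widen n.+1 (F^~ b)) ?leq_subr // big_mkcond.
  apply: eq_bigr => a _; congr (if _ then _ else _); have := ltn_ord b; lia.
rewrite (eq_bigr _ (fun a _ => w a)) (eq_bigr _ (fun b _ => w' b)).
exact: exchange_big.
Qed.

Lemma tri_L1 (V : zmodType) (G : nat -> nat -> V) n :
  \sum_(k < n.+1) \sum_(i < k.+1) G i (k - i)%N =
  \sum_(j < n.+1) \sum_(l < n.+1 - j) G j l.
Proof.
have w : forall k : 'I_n.+1, \sum_(i < k.+1) G i (k - i)%N =
    \sum_(i < n.+1) (if (i <= k)%N then G i (k - i)%N else 0).
  move=> k; rewrite (big_ord_widen n.+1 (fun i => G i (k - i)%N)) ?ltn_ord // big_mkcond.
  by apply: eq_bigr.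
rewrite (eq_bigr _ (fun k _ => w k)) exchange_big /=.
apply: eq_bigr => i _.
rewrite -big_mkcond /=.
have -> : \sum_(k < n.+1 | (i <= k)%N) G i (k - i)%N =
    \sum_(i <= k < n.+1) G i (k - i)%N by rewrite big_geq_mkord.
rewrite -{1}[nat_of_ord i]add0n big_addn big_mkord.
by apply: eq_bigr => l _; rewrite addnK.
Qed.

Lemma tri_L2 (V : zmodType) (G : nat -> nat -> V) n :
  \sum_(m < n.+1) \sum_(j < m.+1) G j (n - m)%N =
  \sum_(j < n.+1) \sum_(l < n.+1 - j) G j l.
Proof.
rewrite (reindex_inj rev_ord_inj) /= (tri_swap (fun a b => G a b)); apply: eq_bigr => k _.
rewrite subSS -subSn; last by rewrite -ltnS.
apply: eq_bigr => j _; congr G; have := ltn_ord k; lia.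
Qed.

Lemma fps_pow_coef (K : fieldType) (g : nat -> K) (A : {poly K}) N :
  (forall i, (i <= N)%N -> A`_i = g i) ->
  forall k i, (i <= N)%N -> fps_pow g k i = (A ^+ k)`_i.
Proof.
move=> hA; elim=> [|k IH] i iN.
  by rewrite expr0 coef1 /=; case: (i == 0%N).
rewrite exprS coefM /= /fps_mul; apply: eq_bigr => [[j ji]] _ /=.
rewrite hA ?IH //; lia.
Qed.

Lemma exp_identity (K : fieldType) (hf : forall k, ((k`!)%:R : K) != 0)
  (g h : nat -> K) n :
  (forall i, g i = (i == 1%N)%:R + h i) -> h 0%N = 0 ->
  (n`!)%:R * fps_exp g n =
  \sum_(m < n.+1) 'C(n, m)%:R * ((m`!)%:R * fps_exp h m).
Proof.
move=> hg h0.
pose Ph : {poly K} := \poly_(i < n.+1) h i.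
have hPh : forall i, (i <= n)%N -> Ph`_i = h i by move=> i iN; rewrite coef_poly ltnS iN.
have hA : forall i, (i <= n)%N -> ('X + Ph)`_i = g i by move=> i iN; rewrite coefD coefX hPh // hg.
pose G j l := (n`!)%:R / ((j`!)%:R * (l`!)%:R) * (Ph ^+ j)`_(n - l)%N.
have L : (n`!)%:R * fps_exp g n = \sum_(k < n.+1) \sum_(i < k.+1) G i (k - i)%N.
  rewrite /fps_exp mulr_sumr; apply: eq_bigr => [[k kn]] _ /=.
  rewrite (fps_pow_coef hA) // exprDn coef_sum mulr_suml mulr_sumr.
  apply: eq_bigr => [[i ik]] _ /=.
  rewrite coefMn coefXnM.
  have -> : (n < k - i)%N = false by lia.
  rewrite /G.
  have hb := bin_fact (ik : (i <= k)%N).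
  have hC : ('C(k, i)%:R : K) = (k`!)%:R / ((i`!)%:R * ((k - i)`!)%:R).
    by rewrite -hb natrM natrM mulfK // mulf_neq0.
  rewrite -[_ *+ 'C(k, i)]mulr_natr hC; field.
  by rewrite !hf.
have R : \sum_(m < n.+1) 'C(n, m)%:R * ((m`!)%:R * fps_exp h m) =
    \sum_(m < n.+1) \sum_(j < m.+1) G j (n - m)%N.
  apply: eq_bigr => [[m mn]] _ /=.
  rewrite /fps_exp !mulr_sumr; apply: eq_bigr => [[j jm]] _ /=.
  rewrite (fps_pow_coef hPh); last by lia.
  rewrite /G subKn; last by lia.
  have hb := bin_fact (mn : (m <= n)%N).
  have hC : ('C(n, m)%:R : K) = (n`!)%:R / ((m`!)%:R * ((n - m)`!)%:R).
    by rewrite -hb natrM natrM mulfK // mulf_neq0.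
  rewrite hC; field.
  by rewrite !hf.
by rewrite L R tri_L1 tri_L2.
Qed.

Section A.
Variables (p : nat) (R : realType) (K : fieldType) (abs : K -> R).
Hypothesis Hp : prime p.
Hypothesis Hc : is_Cp abs p.

Let ip : R := (p%:R)^-1.

Lemma abs_ge0 x : 0 <= abs x. Proof. exact: (Cp_abs_ge0 Hc). Qed.
Lemma absM x y : abs (x * y) = abs x * abs y. Proof. exact: (Cp_abs_mul Hc). Qed.
Lemma abs0 : abs 0 = 0. Proof. by apply/(Cp_abs_eq0 Hc). Qed.
Lemma abs_eq0 x : abs x = 0 -> x = 0. Proof. by move/(Cp_abs_eq0 Hc). Qed.
Lemma abs1 : abs 1 = 1.
Proof.
have h := absM 1 1; rewrite mul1r in h.
have n0 : abs 1 != 0 by apply/eqP => /abs_eq0 /eqP; rewrite oner_eq0.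
by apply: (mulfI n0); rewrite mulr1 -h.
Qed.
Lemma absN x : abs (- x) = abs x.
Proof.
have h1 : abs (-1) = 1.
  have h := absM (-1) (-1); rewrite mulrNN mulr1 abs1 in h.
  have g := abs_ge0 (-1).
  have : (abs (-1) - 1) * (abs (-1) + 1) = 0 by rewrite -subr_sqr expr1n expr2 -h subrr.
  move/eqP; rewrite mulf_eq0 => /orP [/eqP|/eqP]; first by move/eqP; rewrite subr_eq0 => /eqP.
  move=> e; have : 0 < abs (-1) + 1 by rewrite ltr_pwDr. by rewrite e ltxx.
by rewrite -mulN1r absM h1 mul1r.
Qed.
Lemma abs_subC x y : abs (x - y) = abs (y - x).
Proof. by rewrite -absN opprB. Qed.
Lemma abs_add_le x y c : abs x <= c -> abs y <= c -> abs (x + y) <= c.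
Proof.
move=> hx hy; apply: le_trans (Cp_abs_ultra Hc x y) _.
by rewrite ge_max hx hy.
Qed.
Lemma abs_sum (I : Type) (r : seq I) (P : pred I) (F : I -> K) c :
  0 <= c -> (forall i, P i -> abs (F i) <= c) -> abs (\sum_(i <- r | P i) F i) <= c.
Proof.
move=> c0 h; apply: (big_ind (fun x => abs x <= c)) => //.
- by rewrite abs0.
- by move=> x y; apply: abs_add_le.
Qed.
Lemma abs_nat_le1 n : abs (n%:R) <= 1.
Proof.
elim: n => [|n IH]; first by rewrite abs0.
by rewrite -addn1 natrD abs_add_le // abs1.
Qed.
Lemma abs_inv x : abs (x^-1) = (abs x)^-1.
Proof.
have [->|x0] := eqVneq x 0; first by rewrite invr0 abs0 invr0.
have h := absM x (x^-1); rewrite mulfV // abs1 in h.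
have ax : abs x != 0 by apply/eqP => /abs_eq0 /eqP; rewrite (negbTE x0).
by apply: (mulfI ax); rewrite -h mulfV.
Qed.
Lemma abs_exp x n : abs (x ^+ n) = abs x ^+ n.
Proof. by elim: n => [|n IH]; rewrite ?expr0 ?abs1 // !exprS absM IH. Qed.
Lemma p_gt1 : (1 < p)%N. Proof. exact: prime_gt1. Qed.
Lemma ip_gt0 : 0 < ip. Proof. by rewrite /ip invr_gt0 ltr0n prime_gt0. Qed.
Lemma ip_lt1 : ip < 1. Proof. by rewrite /ip invf_lt1 ?ltr0n ?prime_gt0 // ltr1n p_gt1. Qed.
Lemma abs_p : abs (p%:R) = ip. Proof. exact: (Cp_abs_p Hc). Qed.
Lemma abs_coprime m : coprime p m -> abs (m%:R) = 1.
Proof.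
move=> cop; apply/eqP; rewrite eq_le abs_nat_le1 /=; rewrite leNgt; apply/negP => lt1.
have [a _ ] := Bezoutl m (prime_gt0 Hp).
rewrite (eqP cop) => /dvdnP [q hq].
have e : (1 : K) = (q * p)%N%:R - (a * m)%N%:R by rewrite -hq natrD addrK.
have : abs (1 : K) < 1.
  rewrite e; apply: (le_lt_trans (Cp_abs_ultra Hc _ _)).
  rewrite gt_max absN !natrM !absM abs_p; apply/andP; split.
    by apply: (le_lt_trans (ler_wpM2r (ltW ip_gt0) (abs_nat_le1 q))); rewrite mul1r ip_lt1.
  apply: (le_lt_trans (ler_wpM2r (abs_ge0 _) (abs_nat_le1 a))); rewrite mul1r //.
by rewrite abs1 ltxx.
Qed.
Lemma abs_nat n : (0 < n)%N -> abs (n%:R) = ip ^+ logn p n.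
Proof.
move=> n0; have [m cop def] := pfactor_coprime Hp n0.
by rewrite {1}def natrM absM abs_coprime // mul1r natrX abs_exp abs_p.
Qed.
Lemma abs_dvd n L : (p ^ L %| n)%N -> abs (n%:R) <= ip ^+ L.
Proof.
move=> /dvdnP [q ->]; rewrite natrM absM natrX abs_exp abs_p.
rewrite -[leRHS]mul1r; apply: ler_wpM2r; [exact: exprn_ge0 (ltW ip_gt0)|exact: abs_nat_le1].
Qed.

Lemma abs_add_lt x y c : abs x < c -> abs y < c -> abs (x + y) < c.
Proof.
move=> hx hy; apply: le_lt_trans (Cp_abs_ultra Hc x y) _.
by rewrite gt_max hx hy.
Qed.

Lemma abs_sum_seq (I : eqType) (r : seq I) (P : pred I) (F : I -> K) c :
  0 <= c -> (forall i, i \in r -> P i -> abs (F i) <= c) ->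
  abs (\sum_(i <- r | P i) F i) <= c.
Proof.
move=> c0 h; rewrite big_seq_cond; apply: abs_sum => // i /andP[ir Pi].
exact: h.
Qed.

Lemma abs_natB_le1 (n m : nat) : abs (n%:R - m%:R) <= 1.
Proof. by apply: abs_add_le; rewrite ?absN abs_nat_le1. Qed.

Lemma prod_diff k (a b : nat -> K) d : 0 <= d ->
  (forall i, (i < k)%N -> abs (a i) <= 1 /\ abs (b i) <= 1 /\ abs (a i - b i) <= d) ->
  abs (\prod_(i < k) a i - \prod_(i < k) b i) <= d.
Proof.
move=> d0; elim: k => [|k IH] h; first by rewrite !big_ord0 subrr abs0.
rewrite !big_ord_recr /=.
have [ha [hb hab]] := h k (ltnSn k).
have IH' := IH (fun i ik => h i (ltnW ik)).
have hB : abs (\prod_(i < k) b i) <= 1.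
  apply: (big_ind (fun x => abs x <= 1)); first by rewrite abs1.
  - by move=> x y hx hy; rewrite absM -[1]mulr1 ler_pM // abs_ge0.
  - by move=> i _; have [_ [hbi _]] := h i (ltnW (ltn_ord i)).
have -> : \prod_(i < k) a i * a k - \prod_(i < k) b i * b k =
  (\prod_(i < k) a i - \prod_(i < k) b i) * a k + \prod_(i < k) b i * (a k - b k).
  by rewrite mulrBl mulrBr addrA subrK.
apply: abs_add_le; rewrite absM.
  by rewrite -[d]mulr1 ler_pM // abs_ge0.
by rewrite -[d]mul1r ler_pM // abs_ge0.
Qed.

Lemma natr_ffact (n k : nat) : ((n ^_ k)%:R : K) = \prod_(i < k) (n%:R - i%:R).
Proof.
elim: k => [|k IH]; first by rewrite big_ord0 ffactn0.
rewrite big_ord_recr /= -IH ffactnSr natrM.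
case: (leqP k n) => kn; first by rewrite natrB.
rewrite ffact_small // !mul0r. reflexivity.
Qed.

Lemma abs_mod_diff (n m L : nat) : n = m %[mod p ^ L] -> abs (n%:R - m%:R) <= ip ^+ L.
Proof.
wlog nm : n m / (m <= n)%N.
  move=> w e; case: (leqP m n) => h; first exact: w.
  by rewrite abs_subC; apply: w; rewrite ?(ltnW h).
move=> /eqP; rewrite eqn_mod_dvd // => hd.
by rewrite -natrB //; apply: abs_dvd.
Qed.

Lemma abs_fact_ge k : ip ^+ k <= abs ((k`!)%:R).
Proof.
rewrite abs_nat ?fact_gt0 //; apply: (ler_wiXn2l (ltW ip_gt0) (ltW ip_lt1)).
exact: logn_fact_le.
Qed.

Lemma fact_neq0 k : ((k`!)%:R : K) != 0.
Proof. by apply/eqP => /(Cp_char0 Hc) /eqP; rewrite (negbTE (lt0n_neq0 (fact_gt0 k))). Qed.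

Lemma abs_binom_diff (n m k L : nat) : n = m %[mod p ^ (L + k)] ->
  abs ('C(n, k)%:R - 'C(m, k)%:R) <= ip ^+ L.
Proof.
move=> e.
have h1 : abs (('C(n, k)%:R - 'C(m, k)%:R) * (k`!)%:R) <= ip ^+ (L + k).
  rewrite mulrBl -!natrM !bin_ffact !natr_ffact.
  apply: (prod_diff (a := fun i => n%:R - i%:R) (b := fun i => m%:R - i%:R)).
    by rewrite exprn_ge0 // ltW // ip_gt0.
  move=> i _; split; first exact: abs_natB_le1.
  split; first exact: abs_natB_le1.
  by rewrite opprB addrA subrK; apply: abs_mod_diff.
rewrite absM in h1.
have hf := abs_fact_ge k.
have ipk : 0 < ip ^+ k by rewrite exprn_gt0 // ip_gt0.
have := le_trans (ler_wpM2l (abs_ge0 _) hf) h1.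
by rewrite exprD ler_pM2r.
Qed.

Lemma lim_unique (u : nat -> K) l1 l2 : is_lim abs u l1 -> is_lim abs u l2 -> l1 = l2.
Proof.
move=> h1 h2; apply/eqP; apply/negPn/negP => ne.
have pos : 0 < abs (l1 - l2).
  rewrite lt0r abs_ge0 andbT; apply/eqP => /abs_eq0 /eqP; rewrite subr_eq0.
  by rewrite (negbTE ne).
have [N1 H1] := h1 _ pos; have [N2 H2] := h2 _ pos.
have a := H1 (maxn N1 N2) (leq_maxl _ _); have b := H2 (maxn N1 N2) (leq_maxr _ _).
have : abs ((u (maxn N1 N2) - l2) - (u (maxn N1 N2) - l1)) < abs (l1 - l2).
  by apply: abs_add_lt; [exact: b | rewrite absN; exact: a].
have -> : (u (maxn N1 N2) - l2) - (u (maxn N1 N2) - l1) = l1 - l2 by ring.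
by rewrite ltxx.
Qed.

Lemma abs_small_eq0 z : (forall eps : R, 0 < eps -> abs z < eps) -> z = 0.
Proof.
move=> h; apply/eqP; apply/negPn/negP => ne.
have pos : 0 < abs z by rewrite lt0r abs_ge0 andbT; apply/eqP => /abs_eq0 /eqP; rewrite (negbTE ne).
by have := h _ pos; rewrite ltxx.
Qed.

Lemma exp_partial_diff (x : K) n m : (n <= m)%N ->
  exp_partial x m - exp_partial x n = \sum_(n <= k < m) x ^+ k / (k`!)%:R.
Proof.
move=> nm; rewrite /exp_partial -!(big_mkord xpredT (fun k => x ^+ k / (k`!)%:R)).
by rewrite (big_cat_nat (leq0n n) nm) /= addrC addrK.
Qed.

Lemma exp_conv (x : K) : abs x < (p%:R : R) `^ (- ((p.-1)%:R)^-1) ->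
  exists e, is_lim abs (exp_partial x) e.
Proof.
move=> hx.
pose a : R := ((p.-1)%:R)^-1.
pose c : R := (p%:R : R) `^ a.
have p0 : (0 : R) < p%:R by rewrite ltr0n prime_gt0.
have c0 : 0 < c by apply: powR_gt0.
have hx' : abs x * c < 1.
  by move: hx; rewrite powRN -/c -ltr_pdivlMr // div1r.
pose q := abs x * c.
have q0 : 0 <= q by rewrite mulr_ge0 // ?abs_ge0 // ltW.
have p1 : (0 < p.-1)%N by have := p_gt1; lia.
have term : forall k, abs (x ^+ k / (k`!)%:R) <= q ^+ k.
  move=> k; rewrite absM abs_exp abs_inv abs_nat ?fact_gt0 // /q exprMn.
  apply: ler_wpM2l; first by rewrite exprn_ge0 // abs_ge0.
  rewrite -exprVn /ip invrK -(powR_mulrn _ (ltW p0)) -(powR_mulrn _ (ltW c0)) /c -powRrM.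
  apply: ler_powR; first by rewrite ler1n (ltnW p_gt1).
  rewrite /a ler_pdivlMl ?ltr0n // -natrM ler_nat.
  exact: legendre.
have cauchy : is_cauchy abs (exp_partial x).
  move=> eps e0; have [N HN] := pow_small q0 hx' e0.
  have key : forall n m, (N <= n)%N -> (n <= m)%N ->
      abs (exp_partial x m - exp_partial x n) < eps.
    move=> n m Nn nm; rewrite exp_partial_diff //.
    apply: le_lt_trans (HN N (leqnn N)).
    apply: abs_sum_seq; first by rewrite exprn_ge0.
    move=> k; rewrite mem_index_iota => /andP [nk _] _.
    apply: le_trans (term k) _; apply: ler_wiXn2l => //; first by rewrite ltW.
    exact: leq_trans Nn nk.
  exists N => m n Nm Nn; case: (leqP n m) => nm; first exact: key.
  by rewrite abs_subC; apply: key => //; apply: ltnW.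
exact: (Cp_complete Hc cauchy).
Qed.

Lemma fps_pow_bound (h : nat -> K) (r : R) : 0 <= r -> r <= 1 ->
  h 0%N = 0 -> abs (h 1%N) <= r -> (forall l, abs (h l) <= 1) ->
  forall j i, abs (fps_pow h j i) <= r ^+ (2 * j - i).
Proof.
move=> r0 r1 h0 h1 hl; elim=> [|j IH] i.
  rewrite /=; case: (i == 0%N); rewrite ?abs1 ?abs0 // muln0 sub0n expr0 //.
rewrite /= /fps_mul; apply: abs_sum; first exact: exprn_ge0.
move=> [l li] _ /=; rewrite absM.
case: l li => [|[|l]] li.
- by rewrite h0 abs0 mul0r exprn_ge0.
- apply: le_trans (ler_pM (abs_ge0 _) (abs_ge0 _) h1 (IH _)) _.
  rewrite -exprS; apply: ler_wiXn2l => //; lia.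
- apply: le_trans (ler_pM (abs_ge0 _) (abs_ge0 _) (hl _) (IH _)) _.
  rewrite mul1r; apply: ler_wiXn2l => //; lia.
Qed.

Lemma mul_le_l (x y c : R) : 0 <= x -> x <= 1 -> 0 <= y -> y <= c -> x * y <= c.
Proof. by move=> *; nra. Qed.
Lemma mul_le_r (x y c : R) : 0 <= x -> x <= c -> 0 <= y -> y <= 1 -> x * y <= c.
Proof. by move=> *; nra. Qed.

Lemma fact_ratio (k j : nat) : (j <= k)%N ->
  ((k`!)%:R : K) / (j`!)%:R = ('C(k, j) * (k - j)`!)%N%:R.
Proof.
move=> jk; have hb := bin_fact jk.
rewrite -hb !natrM; field; exact: fact_neq0.
Qed.

Lemma a_bounds (h : nat -> K) (r : R) : 0 <= r -> r < 1 ->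
  h 0%N = 0 -> abs (h 1%N) <= r -> (forall l, abs (h l) <= 1) ->
  (forall k, abs ((k`!)%:R * fps_exp h k) <= 1) /\
  (forall eps : R, 0 < eps -> exists M, forall k, (M <= k)%N ->
      abs ((k`!)%:R * fps_exp h k) <= eps).
Proof.
move=> r0 r1 h0 h1 hl.
have PB := fps_pow_bound r0 (ltW r1) h0 h1 hl.
have term : forall k j, (j <= k)%N ->
    abs ((k`!)%:R * (fps_pow h j k / (j`!)%:R)) <=
    abs (('C(k, j) * (k - j)`!)%N%:R) * r ^+ (2 * j - k).
  move=> k j jk; rewrite mulrCA fact_ratio // mulrC absM.
  by apply: ler_wpM2l; [exact: abs_ge0 | exact: PB].
split.
  move=> k; rewrite /fps_exp mulr_sumr; apply: abs_sum => // [[j jk]] _ /=.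
  apply: le_trans (term k j jk) _.
  by apply: mul_le_l; rewrite ?abs_ge0 ?exprn_ge0 ?abs_nat_le1 ?exprn_ile1 ?(ltW r1).
move=> eps e0.
have [J HJ] := pow_small r0 r1 e0.
have [L HL] := pow_small (ltW ip_gt0) ip_lt1 e0.
exists (J + 2 * p * L)%N => k kM.
rewrite /fps_exp mulr_sumr; apply: abs_sum; first exact: ltW.
move=> [j jk] _ /=.
apply: le_trans (term k j jk) _.
case: (leqP J (2 * j - k)) => hJ.
  apply: mul_le_l; rewrite ?abs_ge0 ?exprn_ge0 ?abs_nat_le1 //.
  exact: ltW (HJ _ hJ).
have hpl : (p * L <= k - j)%N by lia.
apply: mul_le_r; rewrite ?abs_ge0 ?exprn_ge0 ?exprn_ile1 //; last exact: ltW.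
apply: le_trans (ltW (HL L (leqnn L))).
apply: abs_dvd; apply: dvdn_mull; exact: dvd_fact_pL.
Qed.

Definition psi (a : nat -> K) (n : nat) : K := \sum_(m < n.+1) 'C(n, m)%:R * a m.

Lemma psi_widen (a : nat -> K) n N : (n < N)%N ->
  psi a n = \sum_(m < N) 'C(n, m)%:R * a m.
Proof.
move=> nN; rewrite /psi (big_ord_widen N (fun m => 'C(n, m)%:R * a m)) // big_mkcond.
apply: eq_bigr => [[m mN]] _ /=; case: ifP => // /negbT; rewrite -leqNgt => h.
by rewrite bin_small // mul0r.
Qed.

Lemma psi_unif (a : nat -> K) : (forall k, abs (a k) <= 1) ->
  (forall eps : R, 0 < eps -> exists M, forall k, (M <= k)%N -> abs (a k) <= eps) ->
  forall eps : R, 0 < eps -> exists Kx : nat, forall n m : nat,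
    n = m %[mod p ^ Kx] -> abs (psi a n - psi a m) < eps.
Proof.
move=> a1 a0 eps e0.
have e2 : 0 < eps / 2 by rewrite divr_gt0.
have [M HM] := a0 _ e2.
have [L HL] := pow_small (ltW ip_gt0) ip_lt1 e2.
exists (L + M)%N => n m e.
apply: le_lt_trans (_ : eps / 2 < eps); last by lra.
rewrite (psi_widen a (_ : n < n + m + 1)%N); last by lia.
rewrite (psi_widen a (_ : m < n + m + 1)%N); last by lia.
rewrite -sumrB; apply: abs_sum; first exact: ltW.
move=> [k kN] _ /=.
rewrite -mulrBl absM.
case: (leqP M k) => kM.
  apply: mul_le_l; rewrite ?abs_ge0 ?abs_natB_le1 //.
  exact: HM.
apply: mul_le_r; rewrite ?abs_ge0 ?a1 //.
apply: le_trans (ltW (HL L (leqnn L))).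
apply: abs_binom_diff.
have dv : (p ^ (L + k) %| p ^ (L + M))%N by rewrite dvdn_exp2l // leq_add2l ltnW.
by rewrite -(modn_dvdm n dv) -(modn_dvdm m dv) e.
Qed.

Lemma zp_compat (x : Zpadic p) N M : (N <= M)%N -> (sval x M %% p ^ N = sval x N)%N.
Proof.
elim: M => [|M IH] NM.
  by move: NM; rewrite leqn0 => /eqP ->; exact: (proj2_sig x 0%N).1.
case: (ltngtP N M.+1) NM => // [NM _|-> _]; last exact: (proj2_sig x M.+1).1.
have dv : (p ^ N %| p ^ M)%N by rewrite dvdn_exp2l.
by rewrite -(modn_dvdm _ dv) (proj2_sig x M).2 IH.
Qed.

Definition unif (chi : nat -> K) := forall eps : R, 0 < eps -> exists Kx : nat,
  forall n m : nat, n = m %[mod p ^ Kx] -> abs (chi n - chi m) < eps.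

Lemma zp_cauchy (chi : nat -> K) (x : Zpadic p) : unif chi ->
  is_cauchy abs (fun N => chi (sval x N)).
Proof.
move=> hu eps e0; have [Kx HK] := hu _ e0; exists Kx => m n hm hn.
apply: HK; rewrite /= !zp_compat //.
Qed.

Lemma extension (chi : nat -> K) : unif chi ->
  exists phi : Zpadic p -> K, Zp_continuous abs phi /\ forall n, phi (to_Zp p n) = chi n.
Proof.
move=> hu.
have ex : forall x : Zpadic p, exists l, is_lim abs (fun N => chi (sval x N)) l.
  by move=> x; apply: (Cp_complete Hc); exact: zp_cauchy.
pose phi x := proj1_sig (constructive_indefinite_description _ (ex x)).
have hphi : forall x, is_lim abs (fun N => chi (sval x N)) (phi x).
  by move=> x; rewrite /phi; case: constructive_indefinite_description.
exists phi; split.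
  move=> x eps e0; have [Kx HK] := hu _ e0; exists Kx => y hy.
  have [N1 H1] := hphi y _ e0; have [N2 H2] := hphi x _ e0.
  pose N := maxn Kx (maxn N1 N2).
  have a := H1 N (leq_trans (leq_maxl N1 N2) (leq_maxr _ _)).
  have b := H2 N (leq_trans (leq_maxr N1 N2) (leq_maxr _ _)).
  have c : abs (chi (sval y N) - chi (sval x N)) < eps.
    apply: HK; rewrite /= !zp_compat ?leq_maxl //.
  have -> : phi y - phi x =
      - (chi (sval y N) - phi y) + (chi (sval y N) - chi (sval x N)) + (chi (sval x N) - phi x).
    by ring.
  apply: abs_add_lt; [apply: abs_add_lt; [rewrite absN; exact: a| exact: c]|exact: b].
move=> n; apply: (lim_unique (hphi (to_Zp p n))).
move=> eps e0; exists n => N nN /=.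
rewrite modn_small; first by rewrite subrr abs0.
apply: leq_trans (ltn_expl n p_gt1) _.
by rewrite leq_exp2l // p_gt1.
Qed.

Lemma uniqueness (phi1 phi2 : Zpadic p -> K) :
  Zp_continuous abs phi1 -> Zp_continuous abs phi2 ->
  (forall n, phi1 (to_Zp p n) = phi2 (to_Zp p n)) -> phi1 = phi2.
Proof.
move=> c1 c2 e; apply: functional_extensionality => x.
apply/eqP; rewrite -subr_eq0; apply/eqP; apply: abs_small_eq0 => eps e0.
have [k1 H1] := c1 x _ e0; have [k2 H2] := c2 x _ e0.
pose y := to_Zp p (sval x (maxn k1 k2)).
have hy : forall k, (k <= maxn k1 k2)%N -> sval y k = sval x k.
  by move=> k hk; rewrite /= zp_compat.
have a := H1 y (hy _ (leq_maxl _ _)); have b := H2 y (hy _ (leq_maxr _ _)).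
have -> : phi1 x - phi2 x = - (phi1 y - phi1 x) + (phi2 y - phi2 x) by rewrite e; ring.
by apply: abs_add_lt; rewrite ?absN.
Qed.
End A.

Unset Implicit Arguments.

Theorem proposition5p2 (p : nat) (R : realType) (K : fieldType) (abs : K -> R)
  (f : nat -> K) :
  prime p -> is_Cp abs p ->
  (forall n : nat, abs (f n) <= 1) ->
  abs (f 0%N) < (p%:R : R) `^ (- ((p.-1)%:R)^-1) ->
  abs (f 1%N - 1) < 1 ->
  (exists e : K, is_lim abs (exp_partial (f 0%N)) e) /\
  (forall e : K, is_lim abs (exp_partial (f 0%N)) e ->
    exists! phi : Zpadic p -> K,
      Zp_continuous abs phi /\
      forall n : nat,
        e * fps_exp (fps_drop_const f) n = phi (to_Zp p n) / (n`!)%:R).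
Proof.
move=> Hp Hc fb f0 f1; split; first exact: (exp_conv Hp Hc f0).
move=> e _.
pose h i := if i == 0%N then 0 else if i == 1%N then f 1%N - 1 else f i.
have hg : forall i, fps_drop_const f i = (i == 1%N)%:R + h i.
  move=> [|[|i]]; rewrite /fps_drop_const /h /=; first by rewrite addr0.
    by rewrite addrC subrK.
  by rewrite add0r.
have h0 : h 0%N = 0 by [].
have hl : forall l, abs (h l) <= 1.
  move=> [|[|l]]; rewrite /h /=; first by rewrite (abs0 Hc).
    exact: ltW.
  exact: fb.
have [a1 a0] := a_bounds Hp Hc (abs_ge0 Hc (f 1%N - 1)) f1 h0 (le_refl _) hl.
pose a k := (k`!)%:R * fps_exp h k.
have hid : forall n, (n`!)%:R * fps_exp (fps_drop_const f) n = psi a n.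
  by move=> n; rewrite (exp_identity (fact_neq0 Hc) n hg h0).
pose chi n := e * psi a n.
have hu : unif p abs chi.
  move=> eps e0.
  have ae : 0 < abs e + 1 by rewrite ltr_pwDr // (abs_ge0 Hc).
  have [Kx HK] := @psi_unif p R K abs Hp Hc a a1 a0 _ (divr_gt0 e0 ae).
  exists Kx => n m hnm; rewrite /chi -mulrBr (absM Hc).
  have := HK n m hnm; set d := abs _ => hd.
  have d0 : 0 <= d by exact: (abs_ge0 Hc).
  have eps' : abs e * (eps / (abs e + 1)) < eps.
    have ge := abs_ge0 Hc e; rewrite mulrA ltr_pdivrMr //; nra.
  apply: le_lt_trans eps'; apply: ler_wpM2l; [exact: (abs_ge0 Hc)| exact: ltW].
have [phi [cphi hphi]] := extension Hp Hc hu.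
have val : forall n, phi (to_Zp p n) = e * ((n`!)%:R * fps_exp (fps_drop_const f) n).
  by move=> n; rewrite hphi /chi hid.
exists phi; split.
  split => // n; rewrite val; field; exact: (fact_neq0 Hc).
move=> phi' [c' h']; apply: (uniqueness Hc cphi c') => n.
rewrite val mulrCA (h' n) mulrCA mulfV ?mulr1 //; exact: (fact_neq0 Hc).
Qed.
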